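(* Let $G$ be a $2$-edge-connected graph and $e\in E(G)$. Then the inequality $x_e\ge 0$ defines a facet of $\mathrm{TECSP}(G)$ if and only if $e$ is not contained in any cut of size exactly $3$.
   Context: All graphs are finite, simple and undirected. For $\emptyset\subsetneq S\subsetneq V(G)$, $\delta(S)$ is the set of edges with exactly one endpoint in $S$ (a cut); a cut with $k$ edges is a $k$-cut. An edge $e$ is a bridge if $\{e\}=\delta(S)$ for some $S$. A graph is $2$-edge-connected if it is connected and has no bridges; the empty graph and a single vertex are $2$-edge-connected. $\chi^H\in\{0,1\}^{E(G)}$ is the incidence vector of $E(H)$, and $\mathrm{TECSP}(G)=\mathrm{conv}\{\chi^H : H\subseteq G\text{ is }2\text{-edge-connected}\}\subseteq\mathbb{R}^{E(G)}$. A facet is a face of dimension $\dim(\mathrm{TECSP}(G))-1$. *)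

(* Defs.v *)
From HB Require Import structures.
From mathcomp Require Import all_boot all_order all_algebra.
Set Implicit Arguments. Unset Strict Implicit. Unset Printing Implicit Defensive.
Import Order.TTheory GRing.Theory Num.Theory.
Local Open Scope ring_scope.

(* A finite simple graph G is given by a vertex type V, an edge type Ed and
   the endpoint map [ends : Ed -> {set V}] with #|ends f| = 2 (no loops) and
   [ends] injective (no parallel edges). *)

Section Graphs.
Variables (V Ed : finType) (ends : Ed -> {set V}).

Definition cut (F : {set Ed}) (S : {set V}) : {set Ed} :=
  [set f in F | #|ends f :&: S| == 1%N].

Definition is_subgraph (W : {set V}) (F : {set Ed}) : Prop :=
  forall f, f \in F -> ends f \subset W.

Definition adjF (F : {set Ed}) : rel V :=
  fun x y => [exists f in F, ends f == [set x; y]].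

Definition sub_connected (W : {set V}) (F : {set Ed}) : Prop :=
  forall x y, x \in W -> y \in W -> connect (adjF F) x y.

Definition is_bridge (W : {set V}) (F : {set Ed}) (f : Ed) : Prop :=
  exists S : {set V}, [/\ S \subset W, S != set0, S != W & cut F S = [set f]].

Definition two_edge_connected (W : {set V}) (F : {set Ed}) : Prop :=
  sub_connected W F /\ forall f, ~ is_bridge W F f.

Definition tec_edgeset (F : {set Ed}) : Prop :=
  exists W : {set V}, is_subgraph W F /\ two_edge_connected W F.

Definition in_3cut (e : Ed) : Prop :=
  exists S : {set V}, [/\ S != set0, S != setT, e \in cut setT S
                        & #|cut setT S| = 3%N].

Variable R : realFieldType.

Definition vec := {ffun Ed -> R^o}.

Definition chi (F : {set Ed}) : vec := [ffun f => if f \in F then 1 else 0].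

Definition TECSP (x : vec) : Prop :=
  exists lam : {ffun {set Ed} -> R},
    [/\ forall F, 0 <= lam F,
        forall F, lam F != 0 -> tec_edgeset F,
        \sum_F lam F = 1
      & x = \sum_F lam F *: chi F].

End Graphs.

Definition aff_indep (R : fieldType) (vT : vectType R) (s : seq vT) : bool :=
  if s is x0 :: s' then free [seq y - x0 | y <- s'] else true.

(* affine dimension of a set X: the maximum number of affinely independent
   points of X, minus one (so the empty set has dimension -1) *)
Definition is_affdim (R : fieldType) (vT : vectType R) (X : vT -> Prop) (d : int)
  : Prop :=
  (exists s : seq vT, [/\ forall x, x \in s -> X x, aff_indep s
                        & (size s)%:Z = d + 1])
  /\ (forall s : seq vT, (forall x, x \in s -> X x) -> aff_indep s ->
        (size s)%:Z <= d + 1).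

Definition nonneg_facet (Ed : finType) (R : realFieldType)
  (P : vec Ed R -> Prop) (e : Ed) : Prop :=
  (forall x, P x -> 0 <= x e) /\
  exists d : int, is_affdim P d /\ is_affdim (fun x => P x /\ x e = 0) (d - 1).

(* Main.v *)
Require Import Defs.
From HB Require Import structures.
From mathcomp Require Import all_boot all_order all_algebra.
From Stdlib Require Import ClassicalEpsilon.
Import Order.TTheory GRing.Theory Num.Theory.
Set Implicit Arguments. Unset Strict Implicit. Unset Printing Implicit Defensive.

Module LAm.
Local Open Scope ring_scope.
Section LA.
Variables (K : fieldType) (vT : vectType K).

Lemma basis_sub (Y : seq vT) : exists b, [/\ {subset b <= Y}, free b & <<b>>%VS = <<Y>>%VS].
Proof.
elim: Y => [|y Y [b [sb fb eb]]]; first by exists [::]; split => //; exact: nil_free.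
case yb: (y \in <<b>>%VS).
- exists b; split => //; first by move=> x /sb; rewrite inE orbC => ->.
  rewrite span_cons -eb; apply/esym/addv_idPr; by rewrite -memvE.
- exists (y :: b); split.
  + by move=> x; rewrite !inE => /orP[->//|/sb ->]; rewrite orbT.
  + by rewrite free_cons yb fb.
  + by rewrite !span_cons eb.
Qed.

Lemma free_size_le (s : seq vT) (U : {vspace vT}) : free s -> {subset s <= U} -> (size s <= \dim U)%N.
Proof. by move=> fs sU; rewrite -(eqnP fs); apply: dimvS; apply/span_subvP. Qed.

Lemma affdim_span (P : vT -> Prop) (Y : seq vT) :
  P 0 -> (forall y, y \in Y -> P y) -> (forall x, P x -> x \in <<Y>>%VS) ->
  is_affdim P (\dim <<Y>>)%:Z.
Proof.
move=> P0 PY YP; split.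
- have [b [sb fb eb]] := basis_sub Y.
  exists (0 :: b); split.
  + by move=> x; rewrite inE => /orP[/eqP->//|/sb]; exact: PY.
  + rewrite /aff_indep.
    have -> : [seq y - 0 | y <- b] = b by rewrite -[RHS]map_id; apply: eq_map => y; rewrite subr0.
    exact fb.
  + by rewrite -eb (eqnP fb) /= -addn1 PoszD.
- move=> [|x0 s] Ps ind /=; first by rewrite -PoszD lez_nat.
  rewrite -addn1 PoszD lerD2r lez_nat.
  have := free_size_le (U := <<Y>>%VS) ind.
  rewrite size_map; apply => y /mapP [z zs ->].
  by apply: memvB; apply: YP; apply: Ps; rewrite inE ?zs ?orbT ?eqxx.
Qed.

Lemma affdim_uniq (P : vT -> Prop) d1 d2 : is_affdim P d1 -> is_affdim P d2 -> d1 = d2.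
Proof.
move=> [[s1 [P1 i1 e1]] b1] [[s2 [P2 i2 e2]] b2].
have := b2 s1 P1 i1; have := b1 s2 P2 i2; rewrite e1 e2 => h1 h2.
have : d1 + 1 = d2 + 1 by apply: le_anti; rewrite h1 h2.
by move/addIr.
Qed.

End LA.

End LAm.
Import LAm.

Section Graph.
Variables (V Ed : finType) (ends : Ed -> {set V}).
Hypothesis Hends : forall f, #|ends f| = 2%N.

Local Notation ct S := (cut ends setT S).

Definition sd (T : finType) (A B : {set T}) := (A :\: B) :|: (B :\: A).

Lemma in_sd (T : finType) (A B : {set T}) x : (x \in sd A B) = (x \in A) (+) (x \in B).
Proof. by rewrite !inE; case: (x \in A); case: (x \in B). Qed.

Lemma card_pairI (a b : V) S : a != b ->
  (#|[set a; b] :&: S| == 1%N) = (a \in S) (+) (b \in S).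
Proof.
move=> ab.
have E : forall x, (x \in [set a; b] :&: S) = ((x == a) && (a \in S)) || ((x == b) && (b \in S)).
  move=> x; rewrite !inE; case: (eqVneq x a) => [->|xa]; first by rewrite ?eqxx (negbTE ab) /= ?orbF.
  by case: (eqVneq x b) => [->|] //=.
case Ha: (a \in S); case Hb: (b \in S).
- have -> : [set a; b] :&: S = [set a; b] by apply/setP=> x; rewrite E Ha Hb !andbT !inE.
  by rewrite cards2 ab.
- have -> : [set a; b] :&: S = [set a] by apply/setP=> x; rewrite E Ha Hb !andbT andbF orbF inE.
  by rewrite cards1.
- have -> : [set a; b] :&: S = [set b] by apply/setP=> x; rewrite E Ha Hb !andbT andbF inE.
  by rewrite cards1.
- have -> : [set a; b] :&: S = set0 by apply/setP=> x; rewrite E Ha Hb !andbF inE.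
  by rewrite cards0.
Qed.

Lemma ends2 f : exists a b, a != b /\ ends f = [set a; b].
Proof. by apply/cards2P; rewrite Hends. Qed.

Lemma in_cut F S f : (f \in cut ends F S) = (f \in F) && (#|ends f :&: S| == 1%N).
Proof. by rewrite inE. Qed.

Lemma cut_sd S Y : ct (sd S Y) = sd (ct S) (ct Y).
Proof.
apply/setP=> f; rewrite in_sd !in_cut !in_setT /=.
have [a [b [ab ->]]] := ends2 f.
rewrite !card_pairI // !in_sd.
by case: (a \in S); case: (a \in Y); case: (b \in S); case: (b \in Y).
Qed.

Lemma cut0 F : cut ends F set0 = set0.
Proof. by apply/setP=> f; rewrite in_cut setI0 cards0 inE andbF. Qed.

Lemma cut_full W F : is_subgraph ends W F -> cut ends F W = set0.
Proof.
move=> sub; apply/setP=> f; rewrite in_cut inE.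
case fF: (f \in F) => //=.
by rewrite (setIidPl (sub f fF)) Hends.
Qed.

Lemma cutT_full : ct setT = set0.
Proof. by apply: cut_full => f _; apply: subsetT. Qed.

Lemma cut_nonempty F S f : f \in cut ends F S -> exists2 a, a \in ends f & a \in S.
Proof.
rewrite in_cut => /andP[_ /eqP h].
have : (0 < #|ends f :&: S|)%N by rewrite h.
rewrite card_gt0 => /set0Pn[a]; rewrite inE => /andP[??]; by exists a.
Qed.

Hypothesis HNB : forall f, ~ is_bridge ends setT setT f.

Lemma nobridge S h : ct S = [set h] -> False.
Proof.
move=> H; apply: (HNB (f:=h)); exists S; split.
- exact: subsetT.
- by apply/eqP=> S0; move: H; rewrite S0 cut0 => /setP/(_ h); rewrite !inE eqxx.
- by apply/eqP=> S0; move: H; rewrite S0 cutT_full => /setP/(_ h); rewrite !inE eqxx.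
- exact: H.
Qed.

Lemma cut_proper S f : f \in ct S -> S != set0 /\ S != setT.
Proof.
move=> fS; split; apply/eqP=> S0; move: fS; rewrite S0 ?cut0 ?cutT_full inE //.
Qed.

Definition twocut f g := [exists S, ct S == [set f; g]].

Lemma twocutP f g : reflect (exists S, ct S = [set f; g]) (twocut f g).
Proof.
apply: (iffP existsP) => [[S /eqP]|[S H]]; exists S => //; by rewrite H.
Qed.

Lemma tc_sym f g : twocut f g = twocut g f.
Proof.
by apply/twocutP/twocutP => -[S H]; exists S; rewrite H setUC.
Qed.

Lemma tc_irr f : twocut f f = false.
Proof.
apply/twocutP => -[S H]; apply: (nobridge (S:=S) (h:=f)); by rewrite H setUid.
Qed.

Lemma tc_trans f a g : f != g -> twocut f a -> twocut a g -> twocut f g.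
Proof.
move=> fg tfa tag.
have fa : f != a by apply: contraTneq tfa => ->; rewrite tc_irr.
have ag : a != g by apply: contraTneq tag => ->; rewrite tc_irr.
move/twocutP: tfa => [S HS]; move/twocutP: tag => [Y HY].
apply/twocutP; exists (sd S Y); rewrite cut_sd HS HY.
apply/setP=> x; rewrite in_sd !inE.
case: (eqVneq x a) => [->|xa]; first by rewrite ?eqxx eq_sym (negbTE fa) (negbTE ag).
rewrite orbF /=.
case: (eqVneq x f) => [->|xf]; first by rewrite (negbTE fg).
by case: (x == g).
Qed.

Definition sim f g := (f == g) || twocut f g.

Lemma sim_refl f : sim f f.
Proof. by rewrite /sim eqxx. Qed.

Lemma sim_sym f g : sim f g = sim g f.
Proof. by rewrite /sim eq_sym tc_sym. Qed.

Lemma sim_trans f a g : sim f a -> sim a g -> sim f g.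
Proof.
rewrite /sim => /orP[/eqP->//|tfa] /orP[/eqP<-|tag]; first by rewrite tfa orbT.
case: (eqVneq f g) => //= fg; exact: tc_trans tfa tag.
Qed.

Definition cls c := [set g | sim c g].

Lemma in_cls c g : (g \in cls c) = sim c g.
Proof. by rewrite inE. Qed.

Lemma cls_refl c : c \in cls c.
Proof. by rewrite in_cls sim_refl. Qed.

Lemma cls_eq c g : g \in cls c -> cls g = cls c.
Proof.
rewrite in_cls => cg; apply/setP=> x; rewrite !in_cls.
apply/idP/idP => h; first exact: sim_trans cg h.
by apply: sim_trans h; rewrite sim_sym.
Qed.

Lemma cls_pair c a b : a \in cls c -> b \in cls c -> a != b -> twocut a b.
Proof.
rewrite !in_cls => ca cb ab.
have : sim a b by apply: sim_trans cb; rewrite sim_sym.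
by rewrite /sim (negbTE ab).
Qed.

Lemma cls_disj c c' : c' \notin cls c -> [disjoint cls c & cls c'].
Proof.
move=> nc; apply/pred0P => x /=; apply/negbTE; apply: contra nc.
rewrite !in_cls => /andP[cx c'x].
by apply: sim_trans cx _; rewrite sim_sym.
Qed.

Lemma reduce (C : {set Ed}) :
  (forall a b, a \in C -> b \in C -> a != b -> twocut a b) ->
  forall n (S : {set V}) (X A : {set Ed}), (#|A| <= n)%N -> [disjoint X & C] -> A \subset C ->
   ct S = X :|: A ->
   exists S' (A' : {set Ed}), [/\ A' \subset C, (#|A'| <= 1)%N & ct S' = X :|: A'].
Proof.
move=> HC; elim=> [|n IH] S X A cA dX AC HS.
  exists S, A; split => //; exact: leq_trans cA _.
case: (leqP #|A| 1) => [A1|/card_gt1P [a [b [aA bA ab]]]]; first by exists S, A.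
have /twocutP [Y HY] := HC a b (subsetP AC a aA) (subsetP AC b bA) ab.
apply: (IH (sd S Y) X (A :\: [set a; b])) => //.
- rewrite -ltnS; apply: leq_trans cA.
  have -> : #|A| = (#|A :\: [set a; b]| + #|A :&: [set a; b]|)%N.
    by rewrite addnC cardsID.
  rewrite (setIidPr _); last by apply/subsetP=> x; rewrite !inE => /orP[]/eqP->.
  by rewrite cards2 ab addn2.
- by apply: subset_trans AC; apply: subsetDl.
- rewrite cut_sd HS HY; apply/setP=> x; rewrite in_sd !inE.
  case xC: (x \in C).
  + rewrite (disjointFl dX xC).
    case: (eqVneq x a) => [->|xa]; first by rewrite aA.
    case: (eqVneq x b) => [->|xb]; first by rewrite bA.
    by case: (x \in A).
  + have xa : (x == a) = false by apply: contraFF xC => /eqP->; apply: (subsetP AC).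
    have xb : (x == b) = false by apply: contraFF xC => /eqP->; apply: (subsetP AC).
    by rewrite xa xb /=; case: (x \in X); case: (x \in A).
Qed.

Lemma card_le1 (T : finType) (A : {set T}) : (#|A| <= 1)%N -> A = set0 \/ exists a, A = [set a].
Proof.
case: (posnP #|A|) => [/cards0_eq->|p]; first by left.
move=> h; right; apply/cards1P; rewrite eqn_leq h; exact: p.
Qed.


Lemma crossing W F : is_subgraph ends W F -> (forall f, ~ is_bridge ends W F f) ->
  forall S h, F :&: ct S != [set h].
Proof.
move=> sub nb S h; apply/eqP => H.
have E : cut ends F (W :&: S) = [set h].
  rewrite -H; apply/setP=> f; rewrite in_cut !inE /=.
  case fF: (f \in F) => //=.
  by rewrite setIA (setIidPl (sub f fF)).
apply: (nb h); exists (W :&: S); split.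
- exact: subsetIl.
- by apply/eqP => S0; move: E; rewrite S0 cut0 => /setP/(_ h); rewrite !inE eqxx.
- by apply/eqP => SW; move: E; rewrite SW (cut_full sub) => /setP/(_ h); rewrite !inE eqxx.
- exact: E.
Qed.

Lemma tec_cross F : tec_edgeset ends F -> forall S h, F :&: ct S != [set h].
Proof. by move=> [W [sub [_ nb]]]; exact: (crossing sub nb). Qed.

Lemma disjP (T : finType) (A B : {set T}) :
  (forall x, x \in A -> x \in B -> False) -> [disjoint A & B].
Proof.
move=> H; apply/pred0P => x /=; case xA: (x \in A); case xB: (x \in B) => //.
by case: (H x).
Qed.

Lemma three (S : {set V}) x y z : x != y -> x != z -> y != z ->
  ct S = [set x; y; z] -> in_3cut ends x.
Proof.
move=> xy xz yz HS; exists S.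
have xS : x \in ct S by rewrite HS !inE eqxx.
have [S0 ST] := cut_proper xS; split => //.
by rewrite HS -setUA cardsU1 cards2 !inE negb_or xy xz yz.
Qed.

Lemma hZ1 c S h : h \in ~: cls c -> ct S = [set h] :|: (ct S :\: ~: cls c) -> False.
Proof.
move=> hD HS.
have hc : h \notin cls c by rewrite inE in hD.
have HS0 : ct S = [set h] :|: (ct S :&: cls c) by rewrite {1}HS setDE setCK.
have d0 : [disjoint [set h] & cls c] by rewrite disjoints1.
have [S' [A' [AC A1 HS']]] := reduce (@cls_pair c) (leqnn _) d0 (subsetIr _ _) HS0.
case: (card_le1 A1) => [A0|[a Aa]].
  by apply: (nobridge (S:=S') (h:=h)); rewrite HS' A0 setU0.
have aC : a \in cls c by apply: (subsetP AC); rewrite Aa inE.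
have tha : twocut h a by apply/twocutP; exists S'; rewrite HS' Aa.
apply: (negP hc); rewrite in_cls; apply: sim_trans (_ : sim c a) _; first by rewrite -in_cls.
by rewrite sim_sym /sim tha orbT.
Qed.

Lemma hZ2 e c S h : ~ in_3cut ends e -> c \notin cls e ->
  h \in ~: (cls e :|: cls c) -> ct S = [set h] :|: (ct S :\: ~: (cls e :|: cls c)) -> False.
Proof.
move=> n3 nc hD HS.
have [he hc] : h \notin cls e /\ h \notin cls c by move: hD; rewrite !inE negb_or => /andP[].
have dj := cls_disj nc.
have HS1 : ct S = ([set h] :|: (ct S :&: cls e)) :|: (ct S :&: cls c).
  by rewrite {1}HS setDE setCK setIUr setUA.
have d1 : [disjoint [set h] :|: (ct S :&: cls e) & cls c].
  apply: disjP => x; rewrite in_setU in_set1 in_setI => /orP[/eqP->|/andP[_ xe] xc]; first by rewrite (negbTE hc).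
  by rewrite (disjointFr dj xe) in xc.
have [S1 [A1 [AC1 A1s HS1']]] := reduce (@cls_pair c) (leqnn _) d1 (subsetIr _ _) HS1.
have HS2 : ct S1 = ([set h] :|: A1) :|: (ct S :&: cls e) by rewrite HS1' setUAC.
have d2 : [disjoint [set h] :|: A1 & cls e].
  apply: disjP => x; rewrite in_setU in_set1 => /orP[/eqP->|xA xe]; first by rewrite (negbTE he).
  by move: (subsetP AC1 x xA); rewrite (disjointFr dj xe).
have [S2 [A2 [AC2 A2s HS2']]] := reduce (@cls_pair e) (leqnn _) d2 (subsetIr _ _) HS2.
case: (card_le1 A1s) => [E1|[a E1]]; case: (card_le1 A2s) => [E2|[b E2]].
- by apply: (nobridge (S:=S2) (h:=h)); rewrite HS2' E1 E2 !setU0.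
- have bC : b \in cls e by apply: (subsetP AC2); rewrite E2 inE.
  have thb : twocut h b by apply/twocutP; exists S2; rewrite HS2' E1 E2 setU0.
  apply: (negP he); rewrite in_cls; apply: sim_trans (_ : sim e b) _; first by rewrite -in_cls.
  by rewrite sim_sym /sim thb orbT.
- have aC : a \in cls c by apply: (subsetP AC1); rewrite E1 inE.
  have tha : twocut h a by apply/twocutP; exists S2; rewrite HS2' E1 E2 setU0.
  apply: (negP hc); rewrite in_cls; apply: sim_trans (_ : sim c a) _; first by rewrite -in_cls.
  by rewrite sim_sym /sim tha orbT.
- have aC : a \in cls c by apply: (subsetP AC1); rewrite E1 inE.
  have bC : b \in cls e by apply: (subsetP AC2); rewrite E2 inE.
  have eC : e \in cls e := cls_refl e.
  have ha : h != a by apply: contraNneq hc => ->.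
  have hb : h != b by apply: contraNneq he => ->.
  have hee : h != e by apply: contraNneq he => ->.
  have ab : a != b by apply: contraTneq aC => ->; rewrite (disjointFr dj bC).
  have ae : a != e by apply: contraTneq aC => ->; rewrite (disjointFr dj eC).
  have HS3 : ct S2 = [set h; a; b] by rewrite HS2' E1 E2.
  case: (eqVneq b e) => [be|be].
    apply: n3; apply: (three (S:=S2) (y:=h) (z:=a)); rewrite ?(eq_sym e) -?be //.
    rewrite HS3; apply/setP=> x; rewrite !inE.
    by case: (x == h); case: (x == a); case: (x == b).
  have teb : twocut e b by move: bC; rewrite in_cls /sim eq_sym (negbTE be).
  move/twocutP: teb => [Y HY].
  apply: n3; apply: (three (S:=sd S2 Y) (y:=h) (z:=a)); rewrite ?(eq_sym e) //.
  rewrite cut_sd HS3 HY; apply/setP=> x; rewrite in_sd !inE.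
  have bh : (b == h) = false by rewrite eq_sym (negbTE hb).
  have ba : (b == a) = false by rewrite eq_sym (negbTE ab).
  have eh : (e == h) = false by rewrite eq_sym (negbTE hee).
  have ea : (e == a) = false by rewrite eq_sym (negbTE ae).
  case: (eqVneq x b) => [->|xb]; first by rewrite ?eqxx ?bh ?ba ?(negbTE be).
  rewrite ?orbF /=.
  case: (eqVneq x e) => [->|xe]; first by rewrite ?eqxx ?eh ?ea.
  by rewrite ?orbF; case: (x == h); case: (x == a).
Qed.

Section Comp.
Variable D : {set Ed}.
Definition adjD := adjF ends D.
Definition comp x := [set y | connect adjD x y].
Definition Dsub (K : {set V}) := [set f in D | ends f \subset K].

Lemma symD : connect_sym adjD.
Proof. by apply: sym_connect_sym => a b; rewrite /adjD /adjF setUC. Qed.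

Lemma comp_closed x f a : f \in D -> a \in ends f -> a \in comp x -> ends f \subset comp x.
Proof.
move=> fD af ax; have [u [v [uv E]]] := ends2 f; apply/subsetP => y yf.
rewrite inE; move: ax; rewrite inE => ax.
case: (eqVneq y a) => [-> //|ya].
apply: connect_trans ax (connect1 _).
apply/existsP; exists f; rewrite fD /=; apply/eqP; rewrite E.
move: af yf ya; rewrite E !inE => /orP[]/eqP-> /orP[]/eqP-> //; rewrite ?eqxx // => _.
by rewrite setUC.
Qed.

Lemma comp_conn x : sub_connected ends (comp x) (Dsub (comp x)).
Proof.
set K := comp x.
have step : forall p u, u \in K -> path adjD u p -> connect (adjF ends (Dsub K)) u (last u p).
  elim => [|v p IH] u uK /=; first by rewrite connect0.
  move=> /andP[uv pv].
  move/existsP: uv => [f /andP[fD /eqP Ef]].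
  have fK : ends f \subset K by apply: (comp_closed fD _ uK); rewrite Ef !inE eqxx.
  have vK : v \in K by apply: (subsetP fK); rewrite Ef !inE eqxx orbT.
  apply: connect_trans (connect1 _) (IH v vK pv).
  by apply/existsP; exists f; rewrite inE fD fK Ef eqxx.
have fromx : forall y, y \in K -> connect (adjF ends (Dsub K)) x y.
  by move=> y; rewrite inE => /connectP [p pp ->]; apply: step pp; rewrite inE connect0.
have symK : connect_sym (adjF ends (Dsub K)).
  by apply: sym_connect_sym => a b; rewrite /adjF setUC.
move=> y z yK zK; apply: connect_trans (fromx z zK); rewrite symK; exact: fromx.
Qed.

Lemma comp_tec x : (forall S h, h \in D -> ct S = [set h] :|: (ct S :\: D) -> False) ->
  tec_edgeset ends (Dsub (comp x)).
Proof.
move=> hZ; set K := comp x; exists K; split; first by move=> f; rewrite inE => /andP[].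
split; first exact: comp_conn.
move=> h [S [SK _ _ HS]].
have hK : h \in cut ends (Dsub K) S by rewrite HS inE.
have hD : h \in D by move: hK; rewrite in_cut inE => /andP[/andP[]].
apply: (hZ S h hD); apply/setP => f; apply/idP/idP.
- move=> fS; case fD: (f \in D).
  + have [a af aS] := cut_nonempty fS.
    have fK : ends f \subset K := comp_closed fD af (subsetP SK a aS).
    have : f \in cut ends (Dsub K) S.
      by rewrite in_cut inE fD fK; move: fS; rewrite in_cut => /andP[_ ->].
    by rewrite HS inE => /eqP ->; rewrite !inE eqxx.
  + by rewrite in_setU in_setD fD fS orbT.
- rewrite in_setU in_set1 in_setD => /orP[/eqP->|/andP[_ //]].
  by move: hK; rewrite !in_cut in_setT => /andP[_ ->].
Qed.

Definition comps := [set comp x | x : V].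

Lemma comp_unique f : f \in D ->
  exists a, f \in Dsub (comp a) /\ forall K, K \in comps -> f \in Dsub K -> K = comp a.
Proof.
move=> fD; have [a [b [ab E]]] := ends2 f.
have aE : a \in ends f by rewrite E !inE eqxx.
exists a; split.
  by rewrite inE fD (comp_closed fD aE) // inE connect0.
move=> K /imsetP [y _ ->]; rewrite inE => /andP[_ sub].
have ya : connect adjD y a by move: (subsetP sub a aE); rewrite inE.
by apply/setP=> z; rewrite !inE (same_connect symD ya).
Qed.

End Comp.

Lemma F1_exists e S : e \in ct S -> #|ct S| = 3%N ->
  exists f g F1, [/\ ct S = [set e; f; g], f != g, e != f, e != g &
     [/\ tec_edgeset ends F1, e \in F1, f \in F1 & g \notin F1]].
Proof.
move=> eS c3.
have : #|ct S :\ e| == 2%N by move: c3; rewrite (cardsD1 e) eS add1n => -[->].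
move/cards2P => [f [g [fg E]]].
have ef : e != f.
  apply/eqP => ef; have : f \in ct S :\ e by rewrite E !inE eqxx.
  by rewrite in_setD1 ef eqxx.
have eg : e != g.
  apply/eqP => eg; have : g \in ct S :\ e by rewrite E !inE eqxx orbT.
  by rewrite in_setD1 eg eqxx.
have HS : ct S = [set e; f; g] by rewrite -(setD1K eS) E setUA.
exists f, g.
have [a [b [ab Ee]]] := ends2 e.
set D := ~: cls g.
exists (Dsub D (comp D a)).
have eD : e \in D.
  rewrite inE in_cls /sim eq_sym (negbTE eg) /=; apply/negP => /twocutP [Y HY].
  apply: (nobridge (S := sd S Y) (h := f)); rewrite cut_sd HS HY.
  apply/setP => x; rewrite in_sd !inE.
  case: (eqVneq x e) => [->|xe]; first by rewrite ?(negbTE ef) ?(negbTE eg) /= ?orbT ?orbF.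
  case: (eqVneq x g) => [->|xg]; first by rewrite ?eqxx eq_sym (negbTE fg) /= ?orbT ?orbF.
  by rewrite /=; case: (x == f).
have aE : a \in ends e by rewrite Ee !inE eqxx.
have eF : e \in Dsub D (comp D a).
  by rewrite inE eD (comp_closed eD aE) // inE connect0.
have gF : g \notin Dsub D (comp D a) by rewrite inE inE cls_refl.
have tF : tec_edgeset ends (Dsub D (comp D a)) by apply: comp_tec => S0 h; exact: hZ1.
split => //; split => //.
apply/negP => fF; have := tec_cross tF S e; rewrite HS => /negP; apply.
move/negP: fF => fF; move: eF gF fF; set F1 := Dsub D (comp D a) => eF gF fF.
apply/eqP/setP => x; rewrite in_setI !in_setU !in_set1.
case: (eqVneq x e) => [->|xe]; first by rewrite eF.
case: (eqVneq x f) => [->|xf]; first by rewrite (negbTE fF).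
case: (eqVneq x g) => [->|xg]; first by rewrite (negbTE gF).
by rewrite andbF.
Qed.

Section Vec.
Variable R : realFieldType.
Local Open Scope ring_scope.
Hypothesis HG : two_edge_connected ends setT setT.

Definition tecb F : bool := if excluded_middle_informative (tec_edgeset ends F) then true else false.
Lemma tecbP F : reflect (tec_edgeset ends F) (tecb F).
Proof. by rewrite /tecb; case: excluded_middle_informative => h; constructor. Qed.

Definition Ys := [seq chi R F | F <- enum [pred F | tecb F]].
Definition Ye e := [seq chi R F | F <- enum [pred F | tecb F && (e \notin F)]].
Definition U := <<Ys>>%VS.
Definition Ue e := <<Ye e>>%VS.

Lemma scoE (a b : R) : a *: (b : R^o) = a * b.
Proof. by []. Qed.

Lemma chiE (F : {set Ed}) (f : Ed) : chi R F f = if f \in F then 1 else 0.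
Proof. by rewrite ffunE. Qed.

Lemma chi_in_U F : tec_edgeset ends F -> chi R F \in U.
Proof.
move=> tF; apply: memv_span; apply: map_f; rewrite mem_enum inE; exact/tecbP.
Qed.

Lemma chi_in_Ue e F : tec_edgeset ends F -> e \notin F -> chi R F \in Ue e.
Proof.
move=> tF eF; apply: memv_span; apply: map_f; rewrite mem_enum inE eF andbT; exact/tecbP.
Qed.

Lemma tec0 : tec_edgeset ends set0.
Proof.
exists set0; split; first by move=> f; rewrite inE.
split; first by move=> x y; rewrite inE.
by move=> h [S [S0 SN _ _]]; move: SN; rewrite (subset0 S) in S0 => /negP; rewrite S0.
Qed.

Lemma tecT : tec_edgeset ends setT.
Proof. by exists setT; split => // f _; exact: subsetT. Qed.

Lemma chi0 : chi R (set0 : {set Ed}) = 0.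
Proof. by apply/ffunP => f; rewrite !ffunE inE. Qed.

Lemma tecsp_U (x : vec Ed R) : TECSP ends x -> x \in U.
Proof.
move=> [lam [l0 lt s1 ->]]; apply: memv_suml => F _.
have [->|nz] := eqVneq (lam F) 0; first by rewrite scale0r mem0v.
by apply: memvZ; apply: chi_in_U; exact: lt F nz.
Qed.

Lemma tecsp_ge0 (x : vec Ed R) e : TECSP ends x -> 0 <= x e.
Proof.
move=> [lam [l0 _ _ ->]]; rewrite sum_ffunE; apply: sumr_ge0 => F _.
by rewrite ffunE chiE; apply: mulr_ge0 => //; case: ifP.
Qed.

Lemma tecsp_face (x : vec Ed R) e : TECSP ends x -> x e = 0 -> x \in Ue e.
Proof.
move=> [lam [l0 lt s1 xE]] xe.
have h : forall F : {set Ed}, e \in F -> lam F = 0.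
  move=> F eF.
  have := @psumr_eq0P _ _ predT (fun F => lam F * chi R F e) _ _ F isT.
  rewrite chiE eF mulr1; apply.
  - by move=> G _; rewrite chiE; apply: mulr_ge0 => //; case: ifP.
  - apply: (etrans _ xe); rewrite xE sum_ffunE; apply: eq_bigr => G _; by rewrite !ffunE.
rewrite xE; apply: memv_suml => F _; case: (eqVneq (lam F) 0) => [->|nz]; first by rewrite scale0r mem0v.
apply: memvZ; apply: chi_in_Ue; first exact: lt.
by apply/negP => /h; apply/eqP.
Qed.

Lemma chi_tecsp (F : {set Ed}) : tec_edgeset ends F -> TECSP ends (chi R F).
Proof.
move=> tF; exists [ffun G => if G == F then 1 else 0]; split.
- by move=> G; rewrite ffunE; case: ifP.
- by move=> G; rewrite ffunE; case: (eqVneq G F) => [-> _ //|_]; rewrite eqxx.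
- rewrite (bigD1 F) //= ffunE eqxx big1 ?addr0 // => G GF; by rewrite ffunE (negbTE GF).
- rewrite (bigD1 F) //= ffunE eqxx scale1r big1 ?addr0 // => G GF; by rewrite ffunE (negbTE GF) scale0r.
Qed.

Lemma affU : is_affdim (TECSP (R:=R) ends) (\dim U)%:Z.
Proof.
apply: affdim_span; first by rewrite -chi0; apply: chi_tecsp; exact: tec0.
- by move=> y /mapP [F]; rewrite mem_enum inE => /tecbP tF ->; exact: chi_tecsp.
- exact: tecsp_U.
Qed.

Lemma affUe e : is_affdim (fun x : vec Ed R => TECSP ends x /\ x e = 0) (\dim (Ue e))%:Z.
Proof.
apply: affdim_span.
- by rewrite -chi0; split; [apply: chi_tecsp; exact: tec0 | rewrite chi0 ffunE].
- move=> y /mapP [F]; rewrite mem_enum inE => /andP[/tecbP tF eF] ->.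
  by split; [exact: chi_tecsp | rewrite chiE (negbTE eF)].
- by move=> x [tx xe]; exact: tecsp_face.
Qed.

Lemma span_eq0 (X : seq (vec Ed R)) u f : (forall y, y \in X -> y f = 0) -> u \in <<X>>%VS -> u f = 0.
Proof.
move=> H uX; rewrite (coord_span (X := in_tuple X) uX) sum_ffunE; apply: big1 => i _.
by rewrite ffunE H ?scaler0 //; exact: (mem_nth 0 (ltn_ord i)).
Qed.

Lemma span_eq (X : seq (vec Ed R)) u f g : (forall y, y \in X -> y f = y g) -> u \in <<X>>%VS -> u f = u g.
Proof.
move=> H uX; rewrite (coord_span (X := in_tuple X) uX) !sum_ffunE; apply: eq_bigr => i _.
by rewrite !ffunE H //; exact: (mem_nth 0 (ltn_ord i)).
Qed.

Local Notation chiT := (chi R [set: Ed]).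

Lemma Ue_e0 e x : x \in Ue e -> x e = 0.
Proof.
apply: span_eq0 => y /mapP [F]; rewrite mem_enum inE => /andP[_ eF] ->.
by rewrite chiE (negbTE eF).
Qed.

Lemma Ue_sub e : (Ue e <= U)%VS.
Proof.
apply/span_subvP => y /mapP [F]; rewrite mem_enum inE => /andP[/tecbP tF _] ->.
exact: chi_in_U.
Qed.

Lemma dim_add1 e : \dim (Ue e + <[chiT]>) = (\dim (Ue e)).+1.
Proof.
rewrite dimv_disjoint_sum; last first.
  apply/eqP; rewrite -subv0; apply/subvP => x /memv_capP [xU /vlineP [k kE]].
  rewrite memv0; have := Ue_e0 xU; rewrite kE ffunE chiE inE scoE mulr1 => ->.
  by rewrite scale0r.
have nz : chiT != 0.
  have H : chiT e != 0 by rewrite chiE inE oner_neq0.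
  by apply/negP => /eqP c0; move: H; rewrite c0 ffunE eqxx.
by rewrite dim_vline nz addn1.
Qed.

Lemma cls_decomp (x : vec Ed R) : (forall c g, g \in cls c -> x g = x c) ->
  x = \sum_c (x c / (#|cls c|%:R)) *: chi R (cls c).
Proof.
move=> hx; apply/ffunP => f; rewrite sum_ffunE.
have E : forall c, ((x c / #|cls c|%:R) *: chi R (cls c)) f =
   if c \in cls f then x f / #|cls f|%:R else 0.
  move=> c; rewrite ffunE chiE.
  case fc: (f \in cls c).
    have cf := cls_eq fc.
    have cf' : c \in cls f by rewrite cf cls_refl.
    by rewrite scoE cf' cf (hx c f fc) mulr1.
  case cf: (c \in cls f); last by rewrite scoE mulr0.
  by rewrite (cls_eq cf) cls_refl in fc.
rewrite (eq_bigr _ (fun c _ => E c)) -big_mkcond sumr_const -[x f / _ *+ _]mulr_natr divfK //.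
rewrite pnatr_eq0 -lt0n card_gt0; apply/set0Pn; exists f; exact: cls_refl.
Qed.

Lemma chi_D_in (e : Ed) (D : {set Ed}) : (forall S h, h \in D -> ct S = [set h] :|: (ct S :\: D) -> False) ->
  e \notin D -> chi R D \in Ue e.
Proof.
move=> hZ eD.
have -> : chi R D = \sum_(K in comps D) chi R (Dsub D K).
  apply/ffunP => f; rewrite sum_ffunE chiE.
  case fD: (f \in D).
    have [a [fa un]] := comp_unique fD.
    rewrite (bigD1 (comp D a)) /=; last by apply/imsetP; exists a.
    rewrite chiE fa big1 ?addr0 // => K /andP[Kc Ka]; rewrite chiE; case: ifP => // fK.
    by rewrite (un K Kc fK) eqxx in Ka.
  by rewrite big1 // => K _; rewrite chiE inE fD.
apply: memv_suml => K /imsetP [x _ ->]; apply: chi_in_Ue; first exact: comp_tec.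
by rewrite inE (negbTE eD).
Qed.

Lemma cls_in (e c : Ed) : ~ in_3cut ends e -> chi R (cls c) \in (Ue e + <[chiT]>)%VS.
Proof.
move=> n3.
have w1 : chi R (~: cls e) \in Ue e.
  by apply: chi_D_in => [S h|]; [exact: hZ1 | rewrite inE cls_refl].
case ce: (c \in cls e).
  have -> : chi R (cls c) = - chi R (~: cls e) + chiT.
    by apply/ffunP => f; rewrite !ffunE (cls_eq ce) in_setC in_setT; case: (f \in cls e); rewrite /= ?oppr0 ?add0r ?addNr.
  by apply: memv_add; [rewrite memvN | exact: memv_line].
have w2 : chi R (~: (cls e :|: cls c)) \in Ue e.
  apply: chi_D_in => [S h|]; first by apply: hZ2 => //; rewrite ce.
  by rewrite in_setC in_setU cls_refl.
have dj := cls_disj (negbT ce).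
have -> : chi R (cls c) = chi R (~: cls e) - chi R (~: (cls e :|: cls c)).
  apply/ffunP => f; rewrite !ffunE !in_setC in_setU.
  case fc: (f \in cls c); case fe: (f \in cls e) => //=; rewrite ?subrr ?subr0 //.
  by rewrite (disjointFr dj fe) in fc.
by apply: (subvP (addvSl _ _)); apply: memvB.
Qed.

Lemma chiF_L (F : {set Ed}) : tec_edgeset ends F -> forall c g, g \in cls c -> chi R F g = chi R F c.
Proof.
move=> tF c g; rewrite in_cls /sim => /orP[/eqP->//|/twocutP [Y HY]].
rewrite !chiE.
have h1 := tec_cross tF Y c; have h2 := tec_cross tF Y g.
rewrite HY in h1 h2.
case cF: (c \in F); case gF: (g \in F) => //.
- case/negP: h1; apply/eqP/setP => x; rewrite !inE.
  case: (eqVneq x c) => [->|xc]; first by rewrite cF.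
  by case: (eqVneq x g) => [->|]; rewrite ?gF ?andbF.
- case/negP: h2; apply/eqP/setP => x; rewrite !inE.
  case: (eqVneq x g) => [->|xg]; first by rewrite gF orbT.
  by case: (eqVneq x c) => [->|]; rewrite ?cF ?andbF.
Qed.

Lemma facet_of_no3 (e : Ed) : ~ in_3cut ends e -> \dim U = (\dim (Ue e)).+1.
Proof.
move=> n3; apply/eqP; rewrite eqn_leq; apply/andP; split.
  rewrite -dim_add1; apply: dimvS; apply/span_subvP => y /mapP [F].
  rewrite mem_enum inE => /tecbP tF ->.
  rewrite (cls_decomp (chiF_L tF)); apply: memv_suml => c _; apply: memvZ.
  exact: cls_in.
rewrite -dim_add1; apply: dimvS; rewrite subv_add Ue_sub -memvE.
exact: chi_in_U tecT.
Qed.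

Lemma no_facet_of_3 (e : Ed) : in_3cut ends e -> (\dim (Ue e) + 2 <= \dim U)%N.
Proof.
move=> [S [_ _ eS c3]].
have [f [g [F1 [HS fg ef eg [tF1 eF1 fF1 gF1]]]]] := F1_exists eS c3.
have Uefg : forall u, u \in Ue e -> u f = u g.
  move=> u; apply: span_eq => y /mapP [F]; rewrite mem_enum inE => /andP[/tecbP tF eF] ->.
  rewrite !chiE.
  have h1 := tec_cross tF S f; have h2 := tec_cross tF S g; rewrite HS in h1 h2.
  case fF: (f \in F); case gF: (g \in F) => //.
  - case/negP: h1; apply/eqP/setP => x; rewrite !inE.
    case: (eqVneq x f) => [->|xf]; first by rewrite fF orbT.
    case: (eqVneq x e) => [->|]; first by rewrite (negbTE eF).
    by case: (eqVneq x g) => [->|]; rewrite ?gF ?andbF.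
  - case/negP: h2; apply/eqP/setP => x; rewrite !inE.
    case: (eqVneq x g) => [->|xg]; first by rewrite gF orbT.
    case: (eqVneq x e) => [->|]; first by rewrite (negbTE eF).
    by case: (eqVneq x f) => [->|]; rewrite ?fF ?andbF.
have d2 : \dim (Ue e + <[chiT]> + <[chi R F1]>) = (\dim (Ue e)).+2.
  rewrite dimv_disjoint_sum; last first.
    apply/eqP; rewrite -subv0; apply/subvP => x /memv_capP [/memv_addP [u uU [w /vlineP [j ->] xE]] /vlineP [k kE]].
    rewrite memv0 kE.
    have Ef := congr1 (fun v : vec Ed R => v f) xE.
    have Eg := congr1 (fun v : vec Ed R => v g) xE.
    rewrite kE /= !ffunE ?fF1 ?(negbTE gF1) ?in_setT !scoE in Ef Eg.
    rewrite (Uefg u uU) in Ef.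
    have -> : k = 0.
      move: Ef Eg; rewrite !mulr1 !mulr0 => kf kg.
      by rewrite kf -kg.
    by rewrite scale0r.
  have nz : chi R F1 != 0.
    have H : chi R F1 e != 0 by rewrite chiE eF1 oner_neq0.
    by apply/negP => /eqP c0; move: H; rewrite c0 ffunE eqxx.
  by rewrite dim_add1 dim_vline nz addn1.
rewrite addn2 -d2; apply: dimvS; rewrite !subv_add Ue_sub -!memvE.
by rewrite (chi_in_U tecT) (chi_in_U tF1).
Qed.

Lemma main_sec (e : Ed) : nonneg_facet (TECSP (R:=R) ends) e <-> ~ in_3cut ends e.
Proof.
split.
- move=> [_ [d [hP hF]]] H3.
  have E1 := affdim_uniq hP affU.
  have E2 := affdim_uniq hF (affUe e).
  have := no_facet_of_3 H3.
  move: E2; rewrite E1 => E2.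
  have : (\dim U)%:Z = (\dim (Ue e)).+1%:Z by rewrite -addn1 PoszD -E2 subrK.
  move=> /eqP; rewrite eqz_nat => /eqP ->.
  by rewrite addn2 ltnn.
- move=> n3; split; first by move=> x; exact: tecsp_ge0.
  exists (\dim U)%:Z; split; first exact: affU.
  by rewrite (facet_of_no3 n3) -addn1 PoszD addrK; exact: affUe.
Qed.

End Vec.

End Graph.

Local Open Scope ring_scope.

Theorem mainTheorem5 (R : realFieldType) (V Ed : finType)
  (ends : Ed -> {set V})
  (Hends : forall f, #|ends f| = 2%N) (Hsimple : injective ends)
  (HG : two_edge_connected ends setT setT) (e : Ed) :
  nonneg_facet (TECSP (R:=R) ends) e <-> ~ in_3cut ends e.
Proof. exact: (main_sec Hends HG.2 R HG e). Qed.
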